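(* Let $Q$ be a restriction quantal frame with identity $e$. Then the space of identities of the étale category $\mathsf{C}(Q)$ (with the subspace topology) is homeomorphic to $\mathsf{pt}(e^{\downarrow})$, via $A\mapsto A\cap e^{\downarrow}$.
   Context: A restriction quantal frame is a frame $(Q,\le)$ with associative multiplication distributing over arbitrary joins on both sides, which is a monoid with identity $e$ and carries join-preserving unary operations $a\mapsto a^{\ast}$, $a\mapsto a^{+}$ with values in the set $e^{\downarrow}=\{x:x\le e\}$ of projections (a commutative subsemigroup of idempotents), fixing projections, with $aa^{\ast}=a$, $a^{+}a=a$, $(ab)^{\ast}=(a^{\ast}b)^{\ast}$, $(ab)^{+}=(ab^{+})^{+}$; the top element is a join of partial isometries ($a$ with $b\le a\Rightarrow b=b^{+}a=ab^{\ast}$) and partial isometries are closed under product. A completely prime filter (of a frame) is a nonempty upward closed subset closed under binary meets, not containing $0$, such that whenever $\bigvee_i a_i$ lies in it some $a_i$ does. $\mathsf{C}(Q)$ is the category of completely prime filters of $Q$ with $\mathbf{d}(A)=\{x:\exists a\in A,\ a^{\ast}\le x\}$, $\mathbf{r}(A)=\{x:\exists a\in A,\ a^{+}\le x\}$, $A\cdot B=\{x:\exists a\in A,b\in B,\ ab\le x\}$ defined iff $\mathbf{d}(A)=\mathbf{r}(B)$; its identities are the completely prime filters containing a projection. Its topology has base $\{\mathscr{X}_a: a \text{ a partial isometry}\}$, $\mathscr{X}_a=\{A:a\in A\}$. For a frame $F$, $\mathsf{pt}(F)$ is the set of completely prime filters of $F$ with topology $\{X_a:a\in F\}$, $X_a=\{P:a\in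 P\}$. *)

(* Defs.v *)
Set Implicit Arguments.

Definition img {A B : Type} (f : A -> B) (S : A -> Prop) : B -> Prop :=
  fun y => exists x, S x /\ y = f x.

Record RQF := {
  car :> Type;
  le : car -> car -> Prop;
  le_refl : forall a, le a a;
  le_trans : forall a b c, le a b -> le b c -> le a c;
  le_antisym : forall a b, le a b -> le b a -> a = b;
  join : (car -> Prop) -> car;
  join_ub : forall S x, S x -> le x (join S);
  join_least : forall S y, (forall x, S x -> le x y) -> le (join S) y;
  meet : car -> car -> car;
  meet_lb_l : forall a b, le (meet a b) a;
  meet_lb_r : forall a b, le (meet a b) b;
  meet_glb : forall a b c, le c a -> le c b -> le c (meet a b);
  meet_join_distr : forall a S, meet a (join S) = join (img (meet a) S);
  mul : car -> car -> car;
  e : car;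
  mul_assoc : forall a b c, mul a (mul b c) = mul (mul a b) c;
  mul_e_l : forall a, mul e a = a;
  mul_e_r : forall a, mul a e = a;
  mul_join_l : forall a S, mul a (join S) = join (img (mul a) S);
  mul_join_r : forall a S, mul (join S) a = join (img (fun x => mul x a) S);
  star : car -> car;
  plus : car -> car;
  star_join : forall S, star (join S) = join (img star S);
  plus_join : forall S, plus (join S) = join (img plus S);
  star_proj : forall a, le (star a) e;
  plus_proj : forall a, le (plus a) e;
  proj_mul_closed : forall x y, le x e -> le y e -> le (mul x y) e;
  proj_comm : forall x y, le x e -> le y e -> mul x y = mul y x;
  proj_idem : forall x, le x e -> mul x x = x;
  star_fix : forall x, le x e -> star x = x;
  plus_fix : forall x, le x e -> plus x = x;
  mul_star : forall a, mul a (star a) = a;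
  plus_mul_self : forall a, mul (plus a) a = a;
  star_mul : forall a b, star (mul a b) = star (mul (star a) b);
  plus_mul : forall a b, plus (mul a b) = plus (mul a (plus b));
  (* top is a join of partial isometries *)
  top_join_pisom : exists S : car -> Prop,
      (forall s, S s -> forall b, le b s -> b = mul (plus b) s /\ b = mul s (star b))
      /\ join S = join (fun _ => True);
  (* partial isometries are closed under product *)
  pisom_mul : forall a c,
      (forall b, le b a -> b = mul (plus b) a /\ b = mul a (star b)) ->
      (forall b, le b c -> b = mul (plus b) c /\ b = mul c (star b)) ->
      (forall b, le b (mul a c) -> b = mul (plus b) (mul a c) /\ b = mul (mul a c) (star b))
}.

Arguments le {r}. Arguments join {r}. Arguments meet {r}. Arguments mul {r}.
Arguments star {r}. Arguments plus {r}.

Section Defs.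
Variable Q : RQF.

Definition pisom (a : Q) : Prop :=
  forall b, le b a -> b = mul (plus b) a /\ b = mul a (star b).

Definition bot : Q := join (fun _ => False).

Definition cpf (A : Q -> Prop) : Prop :=
  (exists a, A a)
  /\ (forall a b, A a -> le a b -> A b)
  /\ (forall a b, A a -> A b -> A (meet a b))
  /\ ~ A bot
  /\ (forall S, A (join S) -> exists a, S a /\ A a).

(** completely prime filters of the frame e^down (joins, meets, bottom of e^down
    are those of Q), represented as subsets of Q contained in e^down. *)
Definition cpf_down (P : Q -> Prop) : Prop :=
  (forall x, P x -> le x (e Q))
  /\ (exists a, P a)
  /\ (forall a b, P a -> le a b -> le b (e Q) -> P b)
  /\ (forall a b, P a -> P b -> P (meet a b))
  /\ ~ P bot
  /\ (forall S, (forall x, S x -> le x (e Q)) -> P (join S) -> exists a, S a /\ P a).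

(** identities of C(Q): completely prime filters containing a projection *)
Definition C_identity (A : Q -> Prop) : Prop :=
  cpf A /\ exists x, le x (e Q) /\ A x.

(** opens of C(Q): unions of basic opens X_a = {A | a in A}, a partial isometry *)
Definition C_open (U : (Q -> Prop) -> Prop) : Prop :=
  forall A, U A -> cpf A /\ exists a, pisom a /\ A a /\ (forall B, cpf B -> B a -> U B).

Definition Id_open (W : (Q -> Prop) -> Prop) : Prop :=
  exists U, C_open U /\ forall A, W A <-> (U A /\ C_identity A).

Definition pt_open (V : (Q -> Prop) -> Prop) : Prop :=
  exists a, le a (e Q) /\ forall P, V P <-> (cpf_down P /\ P a).

Definition restr_e (A : Q -> Prop) : Q -> Prop := fun x => A x /\ le x (e Q).

End Defs.

Definition homeomorphism_via {X Y : Type}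
  (SX : X -> Prop) (OX : (X -> Prop) -> Prop)
  (SY : Y -> Prop) (OY : (Y -> Prop) -> Prop) (f : X -> Y) : Prop :=
  (forall x, SX x -> SY (f x))
  /\ (forall x y, SX x -> SX y -> f x = f y -> x = y)
  /\ (forall y, SY y -> exists x, SX x /\ f x = y)
  /\ (forall V, OY V -> OX (fun x => SX x /\ V (f x)))
  /\ (forall U, OX U -> OY (fun y => exists x, U x /\ SX x /\ f x = y)).

(* Main.v *)
Require Import Defs.
From Stdlib Require Import FunctionalExtensionality PropExtensionality.

Section S.
Variable Q : RQF.

Lemma bot_le (x : Q) : le (bot Q) x.
Proof. unfold bot. apply join_least. intros ? []. Qed.

Lemma pred_ext (A B : Q -> Prop) : (forall x, A x <-> B x) -> A = B.
Proof.
  intro H. apply functional_extensionality. intro x.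
  apply propositional_extensionality. apply H.
Qed.

Definition up (P : Q -> Prop) : Q -> Prop := fun x => exists p, P p /\ le p x.

Lemma up_cpf P : cpf_down Q P -> cpf Q (up P) /\ (exists x, le x (e Q) /\ up P x)
                                /\ restr_e Q (up P) = P.
Proof.
  intros (H1 & [a Ha] & H3 & H4 & H5 & H6).
  split; [|split].
  - split; [exists a; exists a; split; auto; apply le_refl|].
    split; [intros x y [p [Pp lp]] lxy; exists p; split; auto; eapply le_trans; eauto|].
    split.
    { intros x y [p [Pp lp]] [q [Pq lq]]. exists (meet p q); split; [auto|].
      apply meet_glb; [apply (@le_trans Q _ p); [apply meet_lb_l|auto]
                      |apply (@le_trans Q _ q); [apply meet_lb_r|auto]]. }
    split.
    { intros [p [Pp lp]]. apply H5. apply (H3 p); auto.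
      apply bot_le. }
    intros S [p [Pp lp]].
    assert (Hp : p = meet p (join S)).
    { apply le_antisym. apply meet_glb; auto. apply le_refl. apply meet_lb_l. }
    rewrite meet_join_distr in Hp.
    destruct (H6 (img (meet p) S)) as [b [[s [Ss ->]] Pb]].
    { intros x [s [Ss ->]]. eapply le_trans; [apply meet_lb_l|]. apply H1; auto. }
    { rewrite <- Hp; exact Pp. }
    exists s. split; auto. exists (meet p s). split; auto. apply meet_lb_r.
  - exists a. split; auto. exists a; split; auto; apply le_refl.
  - apply pred_ext. intro x. unfold restr_e, up. split.
    + intros [[p [Pp lp]] lx]. apply (H3 p); auto.
    + intros Px. split; [exists x; split; auto; apply le_refl|auto].
Qed.

Lemma restr_cpf A : C_identity Q A -> cpf_down Q (restr_e Q A).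
Proof.
  intros [(H1 & H2 & H3 & H4 & H5) [f [lf Af]]].
  unfold restr_e. split; [intros x []; auto|].
  split; [exists f; auto|].
  split; [intros a b [] lab lb; split; eauto|].
  split; [intros a b [] []; split; auto; eapply le_trans; [apply meet_lb_l|]; auto|].
  split; [intros []; auto|].
  intros S HS [Aj _]. destruct (H5 S Aj) as [s [Ss As]]. exists s; auto.
Qed.

Lemma ident_gen A x : C_identity Q A -> A x -> exists p, restr_e Q A p /\ le p x.
Proof.
  intros [(H1 & H2 & H3 & H4 & H5) [f [lf Af]]] Ax.
  exists (meet f x). split; [split|apply meet_lb_r].
  apply H3; auto. eapply le_trans; [apply meet_lb_l|]; auto.
Qed.

Lemma ident_inj A B : C_identity Q A -> C_identity Q B -> restr_e Q A = restr_e Q B -> A = B.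
Proof.
  intros IA IB Heq. apply pred_ext. intro x. split; intro H.
  - destruct (ident_gen _ _ IA H) as [p [Rp lp]]. rewrite Heq in Rp.
    destruct IB as [(_ & H2 & _) _]. destruct Rp. eauto.
  - destruct (ident_gen _ _ IB H) as [p [Rp lp]]. rewrite <- Heq in Rp.
    destruct IA as [(_ & H2 & _) _]. destruct Rp. eauto.
Qed.

Lemma mul_mono_r (z x y : Q) : le x y -> le (mul z x) (mul z y).
Proof.
  intro lxy.
  assert (Hy : y = join (fun t => t = x \/ t = y)).
  { apply le_antisym. apply join_ub; auto. apply join_least. intros t [->| ->]; auto. apply le_refl. }
  rewrite Hy, mul_join_l. apply join_ub. exists x; auto.
Qed.

Lemma proj_pisom (a : Q) : le a (e Q) -> pisom Q a.
Proof.
  intros la b lb. assert (lbe : le b (e Q)) by (eapply le_trans; eauto).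
  assert (Hba : mul b a = b).
  { apply le_antisym.
    - rewrite <- (mul_e_r Q b) at 2. apply mul_mono_r; auto.
    - rewrite <- (proj_idem Q b lbe) at 1. apply mul_mono_r; auto. }
  rewrite (plus_fix Q b lbe), (star_fix Q b lbe). split; [auto|].
  rewrite proj_comm; auto.
Qed.

End S.

Theorem mainTheorem11 (Q : RQF) :
  homeomorphism_via (@C_identity Q) (@Id_open Q)
                    (@cpf_down Q) (@pt_open Q) (@restr_e Q).
Proof.
  split; [exact (@restr_cpf Q)|].
  split; [intros; apply (ident_inj Q); auto|].
  split.
  { intros P HP. destruct (up_cpf Q P HP) as [H1 [H2 H3]].
    exists (up Q P). split; [split|]; auto. }
  split.
  - intros V [a [la HV]].
    exists (fun A : Q -> Prop => cpf Q A /\ A a). split.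
    + intros A [cA Aa]. split; auto. exists a. split; [apply (proj_pisom Q); auto|].
      split; auto.
    + intro A. split.
      * intros [IA VA]. apply HV in VA as [_ [Aa _]]. split; [split|]; auto.
        destruct IA; auto.
      * intros [[cA Aa] IA]. split; auto. apply HV. split; [apply (restr_cpf Q); auto|].
        split; auto.
  - intros U [U' [CU HU]].
    set (T := fun p => le p (e Q) /\ forall B : Q -> Prop, C_identity Q B -> B p -> U' B).
    exists (join T). split.
    { apply join_least. intros x []; auto. }
    intro P. split.
    + intros [A [UA [IA <-]]]. split; [apply (restr_cpf Q); auto|].
      apply HU in UA as [U'A _].
      destruct (CU A U'A) as [cA [b [_ [Ab Hb]]]].
      destruct (ident_gen Q _ _ IA Ab) as [p [[Ap lpe] lpb]].
      assert (lj : le p (join T)).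
      { apply join_ub. split; auto. intros B [cB _] Bp. apply Hb; auto.
        destruct cB as (_ & H2 & _). eauto. }
      split.
      * destruct cA as (_ & H2 & _). eauto.
      * apply join_least. intros x []; auto.
    + intros [HP Pa]. destruct (up_cpf Q P HP) as [H1 [H2 H3]].
      destruct HP as (Hle & _ & _ & _ & _ & H6).
      destruct (H6 T) as [p [[lpe Hp] Pp]]; [intros x []; auto|auto|].
      exists (up Q P). split; [|split; [split; auto|auto]].
      apply HU. split; [|split; auto]. apply Hp; [split; auto|].
      exists p; split; auto; apply le_refl.
Qed.
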